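(* Let $K\ge2$, let $a\in\Delta^{K-1}$ with $a(i)>0$ for all $i\in[K]$, let $T_0\in\mathbb N$, and let $\tau_{T_0}\in\mathbb Z_{\ge0}^K$ with $\sum_i\tau_{T_0}(i)=T_0$. For $t\ge T_0$ define recursively $\tau_{t+1}=\tau_t+e_{A_{t+1}}$, where $A_{t+1}\in\arg\max_{i\in[K]}\{t\,a(i)-\tau_t(i)\}$ (ties broken arbitrarily) and $e_j$ is the $j$-th standard basis vector. Then there exists a finite $T'\ge T_0$ such that for all $t\ge T'$ and all $i\in[K]$: $\tau_t(i)/t\le a(i)+1/t$ (the set of over-sampled arms $\{i:\tau_t(i)/t>a(i)+1/t\}$ is empty), and $$\Big|\frac{\tau_t(i)}{t}-a(i)\Big|<\frac{K}{t}.$$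
   Context: $\Delta^{K-1}=\{a\in[0,1]^K:\sum_i a(i)=1\}$. $\tau_t(i)$ counts how many of the first $t$ selections were arm $i$, so $\sum_i\tau_t(i)=t$. *)

(* Defs.v *)
From mathcomp Require Import all_boot all_order all_algebra.
From mathcomp Require Import reals.
Set Implicit Arguments. Unset Strict Implicit. Unset Printing Implicit Defensive.
Import Order.TTheory GRing.Theory Num.Theory.
Local Open Scope ring_scope.

Definition tracking_step (R : realType) (K : nat) (a : 'I_K -> R) (t : nat)
  (taut taut1 : 'I_K -> nat) : Prop :=
  exists A : 'I_K,
    (forall j : 'I_K, t%:R * a j - (taut j)%:R <= t%:R * a A - (taut A)%:R)
    /\ (forall j : 'I_K, taut1 j = (taut j + (j == A))%N).

(* Main.v *)
Require Import Defs.
From mathcomp Require Import all_boot all_order all_algebra.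
From mathcomp Require Import reals.
From mathcomp Require Import lra ring.
Import Order.TTheory GRing.Theory Num.Theory.
Local Open Scope ring_scope.

Theorem mainTheorem12 (R : realType) (K : nat) (a : 'I_K -> R)
  (T0 : nat) (tau : nat -> 'I_K -> nat) :
  (2 <= K)%N ->
  (forall i, 0 < a i) ->
  \sum_(i < K) a i = 1 ->
  (\sum_(i < K) tau T0 i)%N = T0 ->
  (forall t, (T0 <= t)%N -> tracking_step a t (tau t) (tau t.+1)) ->
  exists T' : nat, (T0 <= T')%N /\
    forall t : nat, (T' <= t)%N -> forall i : 'I_K,
      (tau t i)%:R / t%:R <= a i + 1 / t%:R /\
      `|(tau t i)%:R / t%:R - a i| < K%:R / t%:R.
Proof.
move=> K2 apos suma sum0 step.
pose d t i := t%:R * a i - (tau t i)%:R.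
have hsum : forall n, (\sum_(i < K) tau (T0 + n)%N i)%N = (T0 + n)%N.
  elim=> [|n IH]; first by rewrite addn0.
  have [A [_ hu]] := step (T0 + n)%N (leq_addr _ _).
  rewrite addnS (eq_bigr _ (fun j _ => hu j)) big_split /= IH.
  rewrite (bigD1 A) //= eqxx big1 ?addn0 ?addn1 // => j /negPf -> //.
have dsum : forall t, (T0 <= t)%N -> \sum_(i < K) d t i = 0.
  move=> t /subnKC <-; rewrite /d sumrB -mulr_sumr suma -natr_sum hsum.
  by rewrite mulr1 subrr.
have stepd : forall t i, (T0 <= t)%N -> exists b : bool,
    d t.+1 i = d t i + a i - b%:R /\ (b -> 0 <= d t i).
  move=> t i ht; have [A [hmax hu]] := step t ht.
  exists (i == A); split.
    rewrite /d hu natrD -addn1 natrD; lra.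
  move/eqP=> ->.
  have : 0 <= K%:R * d t A.
    rewrite -(dsum t ht) mulr_natl.
    have -> : d t A *+ K = \sum_(j < K) d t A by rewrite sumr_const card_ord.
    by apply: ler_sum => j _; rewrite /d; apply: hmax.
  have K0 : (0:R) < K%:R by rewrite ltr0n; apply: leq_trans K2.
  by rewrite pmulr_rge0.
have main : forall i n, -1 < d (T0 + n)%N i \/ d T0 i + n%:R * a i <= d (T0 + n)%N i.
  move=> i; elim=> [|n IH]; first by right; rewrite addn0 mul0r addr0.
  have [b [e hb]] := stepd (T0 + n)%N i (leq_addr _ _).
  have ai := apos i.
  rewrite addnS e -addn1 natrD.
  case: IH => IH.
    left; case: b e hb => e hb /=.
      have := hb isT; lra.
    lra.
  case: (ltrP (-1) (d (T0 + n)%N i)) => h.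
    left; case: b e hb => e hb /=.
      have := hb isT; lra.
    lra.
  right; case: b e hb => e hb /=.
    have := hb isT; lra.
  lra.
pose N := (\max_(i < K) Num.Def.archi_bound ((tau T0 i)%:R / a i))%N.
exists (T0 + N).+1; split; first by rewrite leqW // leq_addr.
move=> t ht i.
have tpos : (0:R) < t%:R by rewrite ltr0n; apply: leq_trans ht.
have hT0 : (T0 <= t)%N by apply: leq_trans ht; rewrite leqW // leq_addr.
have dgt : forall j, -1 < d t j.
  move=> j; have ht' := hT0; move: ht'; move/subnKC => et.
  case: (main j (t - T0)%N); rewrite et // => h.
  have aj := apos j.
  have hb := archi_boundP (divr_ge0 (ler0n R (tau T0 j)) (ltW aj)).
  have hN : (Num.Def.archi_bound ((tau T0 j)%:R / a j) <= t - T0)%N.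
    have hj := @leq_bigmax _ (fun i : 'I_K => Num.Def.archi_bound ((tau T0 i)%:R / a i)) j.
    rewrite -/N in hj. apply: leq_trans hj _.
    rewrite leq_subRL //; exact: ltnW.
  have h1 : (tau T0 j)%:R < (Num.Def.archi_bound ((tau T0 j)%:R / a j))%:R * a j.
    by rewrite -ltr_pdivrMr.
  have h2 : (Num.Def.archi_bound ((tau T0 j)%:R / a j))%:R * a j <= (t - T0)%:R * a j.
    by rewrite ler_pM2r // ler_nat.
  have h3 : 0 <= T0%:R * a j by rewrite mulr_ge0 // ltW.
  rewrite /d in h h3 *; lra.
have dlt : d t i < K%:R.
  have : \sum_(j < K) (d t j + 1) = K%:R.
    by rewrite big_split /= dsum // sumr_const card_ord add0r.
  rewrite (bigD1 i) //= => e.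
  have : 0 <= \sum_(j < K | j != i) (d t j + 1).
    by apply: sumr_ge0 => j _; have := dgt j; lra.
  lra.
have K1 : (1:R) < K%:R by rewrite ltr1n.
have di := dgt i; rewrite /d in di dlt.
have tne : t%:R != 0 :> R by rewrite gt_eqF.
split.
  rewrite ler_pdivrMr // mulrDl mul1r mulVf //; lra.
have -> : (tau t i)%:R / t%:R - a i = ((tau t i)%:R - t%:R * a i) / t%:R.
  by field.
rewrite normrM normfV (gtr0_norm tpos) ltr_pdivrMr // divfK //.
rewrite ltr_norml; apply/andP; split; lra.
Qed.
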